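(* Let $d=1$, constants $0<c_1<1$, $c_2,c_3>0$, and $C^1$ functions $b_1:\mathbb R^2\to\mathbb R$, $b_2,f_1:\mathbb R\to\mathbb R$. Let $$b(x,a,\mathcal L_{(\xi,\alpha)})=-a+b_1(\mathbb E[\xi],\mathbb E[\alpha])+b_2(x),\quad f(x,a,\mathcal L_{(\xi,\alpha)})=\tfrac{|a|^2}{2}-c_1a\,\mathbb E[\alpha]+c_2x\,\mathbb E[\xi]+c_3x\,\mathbb E[\alpha]+f_1(x).$$ Set $\hat c_1:=\frac{c_1}{1-c_1}$, $\bar c_1:=\frac1{1-c_1}$, $\hat c_3:=\frac{c_3}{1-c_1}$, and assume that for all $(m_1,m_2)\in\mathbb R^2$ the symmetric matrix $$\begin{bmatrix}1-[\bar c_1\partial_{m_2}b_1-\hat c_1]&0&\frac12[\hat c_3-\partial_{m_1}b_1]\\0&\bar c_1\partial_{m_2}b_1-\hat c_1&\frac12[\hat c_3+\partial_{m_1}b_1]\\\frac12[\hat c_3-\partial_{m_1}b_1]&\frac12[\hat c_3+\partial_{m_1}b_1]&c_2\end{bmatrix}$$ (derivatives of $b_1$ evaluated at $(m_1,m_2)$) is positive semidefinite. Then Assumption (F) holds with $\Phi(\mathcal L_{(\xi,\eta)})=\mathcal L_{(\xi,\hat c_1\mathbb E[\eta]+\eta)}$, and $$\widehat H(x,p,\mathcal L_{(\xi,\eta)})=-\tfrac12|\hat c_1\mathbb E[\eta]+p|^2+p[b_1(\mathbb E[\xi],\bar c_1\mathbb E[\eta])+b_2(x)]+c_2x\mathbb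 E[\xi]+\hat c_3x\mathbb E[\eta]+f_1(x)$$ satisfies condition (LL-H): for all $\xi,\eta,\gamma,\zeta\in L^2(\mathcal F^1_T)$ and Lipschitz $\varphi$, $$\tilde{\mathbb E}\Big[\langle\zeta,\widehat H_{pp}(\xi)\zeta\rangle-\big\langle\eta,\widehat H_{x\rho_1}(\xi,\tilde\xi)\tilde\eta+\widehat H_{x\rho_2}(\xi,\tilde\xi)[\tilde\gamma+\tilde\zeta]\big\rangle-\big\langle\gamma-\zeta,\widehat H_{p\rho_1}(\xi,\tilde\xi)\tilde\eta+\widehat H_{p\rho_2}(\xi,\tilde\xi)[\tilde\gamma+\tilde\zeta]\big\rangle\Big]\le0.$$
   Context: Hamiltonian $H(x,p,\nu):=\inf_a[p\,b(x,a,\nu)+f(x,a,\nu)]$. Assumption (F): (i) unique minimizer $\phi(x,p,\nu)$; (ii) for all $\xi\in L^2(\mathcal F)$, $\eta\in L^2(\sigma(\xi))$ the map $\nu\mapsto\mathcal L_{(\xi,\phi(\xi,\eta,\nu))}$ has a unique fixed point $\Phi(\mathcal L_{(\xi,\eta)})$. $\widehat H(x,p,\rho):=H(x,p,\Phi(\rho))$; $\partial_{\rho_1},\partial_{\rho_2}$ are the components of the Lions derivative in $\rho\in\mathcal P_2(\mathbb R^2)$ at a point $(\tilde x,\tilde p)$ w.r.t. $\tilde x$ and $\tilde p$. Shorthand: with $\rho:=\mathcal L_{(\xi,\varphi(\xi))}$, $\widehat H_{pp}(x):=\partial_{pp}\widehat H(x,\varphi(x),\rho)$, $\widehat H_{a\rho_i}(x,\tilde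 x):=\partial_a\partial_{\rho_i}\widehat H(x,\varphi(x),\rho,\tilde x,\varphi(\tilde x))$ for $a\in\{x,p\}$. $\tilde\xi$ etc. denote independent copies on an extended probability space and $\tilde{\mathbb E}$ the expectation there; $\mathcal F^1_T$ is the $\sigma$-algebra of the idiosyncratic probability space (atomless). *)

(* Defs.v *)
From HB Require Import structures.
From mathcomp Require Import all_boot all_order all_algebra.
From mathcomp Require Import all_classical all_reals all_analysis.
Set Implicit Arguments.
Unset Strict Implicit.
Unset Printing Implicit Defensive.
Import Order.TTheory GRing.Theory Num.Theory numFieldNormedType.Exports.
Local Open Scope classical_set_scope.
Local Open Scope ring_scope.

Section Defs.
Context {R : realType}.

Section Space.
Context {d : measure_display} {Om : measurableType d}.
Variable P : probability Om R.

Definition atomless := forall A : set Om, measurable A -> (0 < P A)%E ->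
  exists B : set Om, [/\ measurable B, B `<=` A, (0 < P B)%E & (P B < P A)%E].

Definition L2 (X : Om -> R) :=
  measurable_fun setT X /\ (\int[P]_w ((X w) ^+ 2)%:E < +oo)%E.

Definition Ex (X : Om -> R) : R := Rintegral P setT X.

Definition sigma_meas (X Y : Om -> R) := forall B : set R, measurable B ->
  exists C : set R, measurable C /\ Y @^-1` B = X @^-1` C.

Definition is_law (X Y : Om -> R) (nu : probability (R * R)%type R) :=
  forall A : set (R * R), measurable A ->
    nu A = P ((fun w => (X w, Y w)) @^-1` A).

Definition normL2 (H1 H2 : Om -> R) : R :=
  Num.sqrt (Ex (fun w => H1 w ^+ 2 + H2 w ^+ 2)).

(* (g1, g2) = (d_{rho_1} U(rho, .), d_{rho_2} U(rho, .)) is the Lions derivative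
   of U : P_2(R^2) -> R at rho, defined through the Frechet derivative of the
   lift (X,Y) |-> U(L_{(X,Y)}) on L^2(Omega; R^2). *)
Definition LionsDer (U : probability (R * R)%type R -> R)
    (rho : probability (R * R)%type R) (g1 g2 : R * R -> R) :=
  [/\ measurable_fun setT g1, measurable_fun setT g2,
      (\int[rho]_z ((g1 z) ^+ 2)%:E < +oo)%E,
      (\int[rho]_z ((g2 z) ^+ 2)%:E < +oo)%E &
  forall X Y : Om -> R, L2 X -> L2 Y -> is_law X Y rho ->
  forall eps : R, 0 < eps -> exists2 delta : R, 0 < delta &
  forall H1 H2 : Om -> R, L2 H1 -> L2 H2 -> normL2 H1 H2 < delta ->
  forall rho' : probability (R * R)%type R,
    is_law (fun w => X w + H1 w) (fun w => Y w + H2 w) rho' ->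
    `| U rho' - U rho
       - Ex (fun w => g1 (X w, Y w) * H1 w + g2 (X w, Y w) * H2 w) |
      <= eps * normL2 H1 H2].
End Space.

Definition P2 (nu : probability (R * R)%type R) :=
  (\int[nu]_z ((z.1 ^+ 2 + z.2 ^+ 2)%:E) < +oo)%E.
Definition mean1 (nu : probability (R * R)%type R) : R := Rintegral nu setT fst.
Definition mean2 (nu : probability (R * R)%type R) : R := Rintegral nu setT snd.

Definition C1 (g : R -> R) :=
  (forall x, derivable g x 1) /\ continuous (derive1 g).
Definition pd1 (g : R -> R -> R) (m1 m2 : R) := derive1 (fun m => g m m2) m1.
Definition pd2 (g : R -> R -> R) (m1 m2 : R) := derive1 (fun m => g m1 m) m2.
Definition C1_2 (g : R -> R -> R) :=
  (forall m1 m2, derivable (fun m => g m m2) m1 1 /\ derivable (fun m => g m1 m) m2 1)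
  /\ continuous (fun z : R * R => pd1 g z.1 z.2)
  /\ continuous (fun z : R * R => pd2 g z.1 z.2).

Definition Lipschitz (g : R -> R) :=
  exists L : R, forall x y, `|g x - g y| <= L * `|x - y|.

Definition psd3 (A : 'M[R]_3) := forall v : 'cV[R]_3, 0 <= (v^T *m A *m v) 0 0.

Definition bfun (b1 : R -> R -> R) (b2 : R -> R) x a nu :=
  - a + b1 (mean1 nu) (mean2 nu) + b2 x.
Definition ffun (c1 c2 c3 : R) (f1 : R -> R) x a nu :=
  a ^+ 2 / 2 - c1 * a * mean2 nu + c2 * x * mean1 nu + c3 * x * mean2 nu + f1 x.
Definition hobj c1 c2 c3 b1 b2 f1 (x p : R) nu (a : R) :=
  p * bfun b1 b2 x a nu + ffun c1 c2 c3 f1 x a nu.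
Definition Hinf c1 c2 c3 b1 b2 f1 (x p : R) nu :=
  inf (range (hobj c1 c2 c3 b1 b2 f1 x p nu)).
Definition is_minimizer (g : R -> R) (a : R) := forall a', g a <= g a'.

Definition hc1 (c1 : R) := c1 / (1 - c1).
Definition bc1 (c1 : R) := 1 / (1 - c1).
Definition hc3 (c1 c3 : R) := c3 / (1 - c1).

Definition Hhat c1 c2 c3 (b1 : R -> R -> R) (b2 f1 : R -> R) (x p : R)
    (rho : probability (R * R)%type R) : R :=
  - (hc1 c1 * mean2 rho + p) ^+ 2 / 2
  + p * (b1 (mean1 rho) (bc1 c1 * mean2 rho) + b2 x)
  + c2 * x * mean1 rho + hc3 c1 c3 * x * mean2 rho + f1 x.

Definition condmat (c1 c2 c3 : R) (b1 : R -> R -> R) (m1 m2 : R) : 'M[R]_3 :=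
  let k := bc1 c1 * pd2 b1 m1 m2 - hc1 c1 in
  let u := (hc3 c1 c3 - pd1 b1 m1 m2) / 2 in
  let v := (hc3 c1 c3 + pd1 b1 m1 m2) / 2 in
  let rows := [:: [:: 1 - k; 0; u]; [:: 0; k; v]; [:: u; v; c2]] in
  \matrix_(i < 3, j < 3) nth 0 (nth [::] rows i) j.
End Defs.

(* Main.v *)
Require Import Defs.
From HB Require Import structures.
From mathcomp Require Import all_boot all_order all_algebra.
From mathcomp Require Import all_classical all_reals all_analysis.
From mathcomp Require Import ring lra measurable_realfun.
Import Order.TTheory GRing.Theory Num.Theory numFieldNormedType.Exports.
Local Open Scope classical_set_scope.
Local Open Scope ring_scope.
Section Meas.
Context {R : realType} {d : measure_display} {Om : measurableType d}.
Variable P : probability Om R.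

Lemma L2_int2 {X : Om -> R} : L2 P X ->
  P.-integrable setT (EFin \o (fun w => X w ^+ 2)).
Proof.
move=> [mX fin]; apply/integrableP; split.
  by apply/measurable_EFinP; apply: measurable_funX.
apply: le_lt_trans fin; rewrite le_eqVlt; apply/orP; left; apply/eqP.
by apply: eq_integral => w _ /=; rewrite ger0_norm // sqr_ge0.
Qed.

Lemma L2_int {X : Om -> R} : L2 P X -> P.-integrable setT (EFin \o X).
Proof.
move=> hX; have [mX _] := hX; have i2 := L2_int2 hX.
apply/integrableP; split; first exact/measurable_EFinP.
have i1 : P.-integrable setT (EFin \o (fun w => 1 + X w ^+ 2)).
  apply: (eq_integrable _ (cst 1%:E \+ (EFin \o (fun w => X w ^+ 2)))) => //.
  apply: integrableD => //; exact: finite_measure_integrable_cst.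
move/integrableP: i1 => [_]; apply: le_lt_trans.
apply: ge0_le_integral => //.
- by apply/measurable_EFinP; apply: measurableT_comp.
- by apply/measurable_EFinP; apply: measurableT_comp => //; apply: measurable_funD => //; apply: measurable_funX.
- move=> w _; rewrite /= lee_fin.
  have e : X w ^+ 2 = `|X w| ^+ 2 by rewrite real_normK ?num_real.
  have t0 := normr_ge0 (X w).
  rewrite (ger0_norm (x:=1 + X w ^+ 2)); last by rewrite e; nra.
  rewrite e; nra.
Qed.
End Meas.
Section Ex.
Context {R : realType} {d : measure_display} {Om : measurableType d}.
Variable P : probability Om R.
Notation Int X := (P.-integrable setT (EFin \o X)).

Lemma Ex_cst (k : R) : Ex P (fun _ => k) = k.
Proof. rewrite /Ex Rintegral_cst //; have e : P [set: Om] = 1%E := probability_setT P. by move: e => /= ->; rewrite mulr1. Qed.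

Lemma ExD X Y : Int X -> Int Y -> Ex P (fun w => X w + Y w) = Ex P X + Ex P Y.
Proof. by move=> iX iY; rewrite /Ex RintegralD. Qed.

Lemma ExB X Y : Int X -> Int Y -> Ex P (fun w => X w - Y w) = Ex P X - Ex P Y.
Proof. by move=> iX iY; rewrite /Ex RintegralB. Qed.

Lemma ExZ (k : R) X : Int X -> Ex P (fun w => k * X w) = k * Ex P X.
Proof. by move=> iX; rewrite /Ex RintegralZl. Qed.

Lemma int_cst (k : R) : Int (fun _ => k).
Proof. exact: finite_measure_integrable_cst. Qed.

Lemma intD X Y : Int X -> Int Y -> Int (fun w => X w + Y w).
Proof. move=> iX iY; exact: (integrableD _ iX iY). Qed.

Lemma intZ (k : R) X : Int X -> Int (fun w => k * X w).
Proof. move=> iX; exact: (integrableZl _ _ iX). Qed.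

Lemma intN X : Int X -> Int (fun w => - X w).
Proof.
move=> iX; apply: (eq_integrable _ (fun w => (-1 * X w)%:E)) => //.
  by move=> w _ /=; rewrite mulN1r.
exact: intZ.
Qed.

Lemma intB X Y : Int X -> Int Y -> Int (fun w => X w - Y w).
Proof. by move=> iX iY; apply: intD => //; apply: intN. Qed.

Lemma Ex_ge0 X : (forall w, 0 <= X w) -> 0 <= Ex P X.
Proof. by move=> h; apply: Rintegral_ge0. Qed.

Lemma Ex_sq_le X : L2 P X -> (Ex P X) ^+ 2 <= Ex P (fun w => X w ^+ 2).
Proof.
move=> hX; have i1 := L2_int _ hX; have i2 := L2_int2 _ hX.
set c := Ex P X.
have h : 0 <= Ex P (fun w => X w ^+ 2 - (2 * c) * X w + c ^+ 2).
  apply: (@le_trans _ _ (Ex P (fun w => (X w - c) ^+ 2))).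
    by apply: Ex_ge0 => w; exact: sqr_ge0.
  by rewrite le_eqVlt; apply/orP; left; apply/eqP; congr Ex; apply/funext => w; ring.
rewrite ExD ?ExB ?ExZ ?Ex_cst // in h.
- rewrite -/c in h; nra.
- exact: int_cst.
- exact: intZ.
- by apply: intB => //; apply: intZ.
- exact: int_cst.
Qed.

Lemma absEx_le_normL2 H1 H2 : L2 P H1 -> L2 P H2 ->
  `|Ex P H1| <= normL2 P H1 H2.
Proof.
move=> h1 h2; rewrite /normL2 -sqrtr_sqr ler_sqrt; last first.
  by apply: Ex_ge0 => w; apply: addr_ge0; exact: sqr_ge0.
rewrite ExD; [|exact: L2_int2|exact: L2_int2].
have := @Ex_sq_le H1 h1; have : 0 <= Ex P (fun w => H2 w ^+ 2).
  by apply: Ex_ge0 => w; exact: sqr_ge0.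
lra.
Qed.

Lemma absEx_le_normL2' H1 H2 : L2 P H1 -> L2 P H2 ->
  `|Ex P H2| <= normL2 P H1 H2.
Proof.
move=> h1 h2; have -> : normL2 P H1 H2 = normL2 P H2 H1.
  by rewrite /normL2; congr Num.sqrt; congr Ex; apply/funext => w; rewrite addrC.
exact: absEx_le_normL2.
Qed.
End Ex.
Section Law.
Context {R : realType} {d : measure_display} {Om : measurableType d}.
Variable P : probability Om R.

Definition mkmf {f : Om -> (R * R)%type} (mf : measurable_fun [set: Om] f) :
  {mfun Om >-> (R * R)%type} := HB.pack f (isMeasurableFun.Build _ _ _ _ f mf).

Lemma mpair (X Y : Om -> R) : measurable_fun setT X -> measurable_fun setT Y ->
  measurable_fun setT (fun w => (X w, Y w) : (R * R)%type).
Proof. by move=> mX mY; apply: measurable_fun_pair. Qed.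

Lemma law_dist (X Y : Om -> R) (mX : measurable_fun setT X) (mY : measurable_fun setT Y) :
  is_law P X Y (distribution P (mkmf (mpair _ _ mX mY))).
Proof. by []. Qed.

Lemma int_law_eq (X Y : Om -> R) (nu : probability (R * R)%type R)
  (mX : measurable_fun setT X) (mY : measurable_fun setT Y) (g : (R * R)%type -> \bar R) :
  is_law P X Y nu ->
  (\int[nu]_z g z = \int[distribution P (mkmf (mpair _ _ mX mY))]_z g z)%E.
Proof.
move=> hl; apply: eq_measure_integral => A mA _; exact: hl.
Qed.

Lemma Rint_law (X Y : Om -> R) (nu : probability (R * R)%type R) (g : (R * R)%type -> R) :
  measurable_fun setT X -> measurable_fun setT Y -> is_law P X Y nu ->
  measurable_fun setT g ->
  P.-integrable setT (EFin \o (fun w => g (X w, Y w))) ->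
  Rintegral nu setT g = Ex P (fun w => g (X w, Y w)).
Proof.
move=> mX mY hl mg ig; rewrite /Rintegral /Ex /Rintegral; congr fine.
rewrite (@int_law_eq X Y nu mX mY) //.
rewrite (integral_distribution (X := mkmf (mpair _ _ mX mY)) (f := EFin \o g)) //.
exact/measurable_EFinP.
Qed.
End Law.
Section Law2.
Context {R : realType} {d : measure_display} {Om : measurableType d}.
Variable P : probability Om R.
Notation Int X := (P.-integrable setT (EFin \o X)).

Lemma int_meas X : Int X -> measurable_fun setT X.
Proof. by move/integrableP => [/measurable_EFinP]. Qed.

Lemma mean1_law {X Y : Om -> R} {nu} : Int X -> Int Y -> is_law P X Y nu ->
  mean1 nu = Ex P X.
Proof.
move=> iX iY hl; rewrite /mean1 (@Rint_law _ _ _ P X Y nu fst) //; try exact: int_meas; try exact: measurable_fst; try exact: measurable_snd.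
Qed.

Lemma mean2_law {X Y : Om -> R} {nu} : Int X -> Int Y -> is_law P X Y nu ->
  mean2 nu = Ex P Y.
Proof.
move=> iX iY hl; rewrite /mean2 (@Rint_law _ _ _ P X Y nu snd) //; try exact: int_meas; try exact: measurable_fst; try exact: measurable_snd.
Qed.

Lemma L2_of_int X : Int (fun w => X w ^+ 2) -> measurable_fun setT X -> L2 P X.
Proof.
move=> /integrableP [_ fin] mX; split => //; apply: le_lt_trans fin.
rewrite le_eqVlt; apply/orP; left; apply/eqP.
by apply: eq_integral => w _ /=; rewrite ger0_norm // sqr_ge0.
Qed.

Lemma L2_affine (c : R) X : L2 P X -> L2 P (fun w => c + X w).
Proof.
move=> hX; have [mX _] := hX; apply: L2_of_int; last first.
  by apply: measurable_funD.
apply: (eq_integrable _ (EFin \o (fun w => (c ^+ 2 + 2 * c * X w) + X w ^+ 2))) => //.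
  by move=> w _ /=; congr EFin; ring.
apply: intD; last exact: L2_int2.
apply: intD; first exact: int_cst.
by apply: intZ; exact: L2_int.
Qed.

Lemma P2_law (X Y : Om -> R) nu : L2 P X -> L2 P Y -> is_law P X Y nu -> P2 nu.
Proof.
move=> hX hY hl; have [mX _] := hX; have [mY _] := hY.
rewrite /P2 (@int_law_eq _ _ _ P X Y nu mX mY) //.
rewrite (@ge0_integral_distribution _ _ _ _ _ P (mkmf (mpair _ _ mX mY))) //; last first.
- by move=> z; rewrite lee_fin addr_ge0 // sqr_ge0.
- apply/measurable_EFinP; apply: measurable_funD; apply: measurable_funX.
  + exact: measurable_fst.
  + exact: measurable_snd.
have := @intD _ _ _ P _ _ (L2_int2 _ hX) (L2_int2 _ hY).
move/integrableP => [_]; apply: le_lt_trans.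
rewrite le_eqVlt; apply/orP; left; apply/eqP.
by apply: eq_integral => w _ /=; rewrite ger0_norm // addr_ge0 // sqr_ge0.
Qed.
End Law2.
Section Alg.
Context {R : realType}.
Variables (c1 c2 c3 : R) (b1 : R -> R -> R) (b2 f1 : R -> R).

Definition a0 (p : R) (nu : probability (R * R)%type R) := p + c1 * mean2 nu.

Lemma hobj_sq x p nu a : hobj c1 c2 c3 b1 b2 f1 x p nu a =
  (a - a0 p nu) ^+ 2 / 2 + hobj c1 c2 c3 b1 b2 f1 x p nu (a0 p nu).
Proof. rewrite /hobj /bfun /ffun /a0; by field. Qed.

Lemma minimizer_iff x p nu a :
  is_minimizer (hobj c1 c2 c3 b1 b2 f1 x p nu) a <-> a = a0 p nu.
Proof.
split.
- move=> h; have := h (a0 p nu); rewrite hobj_sq.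
  have := sqr_ge0 (a - a0 p nu) => h1 h2.
  have : (a - a0 p nu) ^+ 2 = 0 by lra.
  by move/eqP; rewrite sqrf_eq0 subr_eq0 => /eqP.
- move=> -> a'; rewrite [X in _ <= X]hobj_sq; have := sqr_ge0 (a' - a0 p nu); lra.
Qed.

Lemma Hinf_val x p nu : Hinf c1 c2 c3 b1 b2 f1 x p nu =
  hobj c1 c2 c3 b1 b2 f1 x p nu (a0 p nu).
Proof.
have lb : lbound (range (hobj c1 c2 c3 b1 b2 f1 x p nu)) (hobj c1 c2 c3 b1 b2 f1 x p nu (a0 p nu)).
  by move=> _ [a _ <-]; have /minimizer_iff h := erefl (a0 p nu); exact: h.
apply/eqP; rewrite eq_le; apply/andP; split.
- apply: (ge_inf (E := range _)); last by exists (a0 p nu).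
  by exists (hobj c1 c2 c3 b1 b2 f1 x p nu (a0 p nu)).
- apply: lb_le_inf => //; by exists (hobj c1 c2 c3 b1 b2 f1 x p nu (a0 p nu)), (a0 p nu).
Qed.
End Alg.

Lemma hobj_Hhat {R : realType} (c1 c2 c3 : R) b1 b2 f1 x p
  (nu rho : probability (R * R)%type R) :
  c1 != 1 -> mean1 nu = mean1 rho -> mean2 nu = bc1 c1 * mean2 rho ->
  hobj c1 c2 c3 b1 b2 f1 x p nu (a0 c1 p nu) = Hhat c1 c2 c3 b1 b2 f1 x p rho.
Proof.
move=> c11 h1 h2; rewrite /hobj /bfun /ffun /a0 /Hhat h1 h2 /hc1 /bc1 /hc3.
have : 1 - c1 != 0 by rewrite subr_eq0 eq_sym.
move=> hh; field => //.
Qed.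

Lemma hc1_bc1 {R : realType} (c1 e : R) : c1 != 1 -> hc1 c1 * e + e = bc1 c1 * e.
Proof.
move=> c11; have : 1 - c1 != 0 by rewrite subr_eq0 eq_sym.
move=> hh; rewrite /hc1 /bc1; field => //.
Qed.
Section Parts.
Context {R : realType} {d : measure_display} {Om : measurableType d}.
Variable P : probability Om R.
Variables (c1 c2 c3 : R) (b1 : R -> R -> R) (b2 f1 : R -> R).
Hypothesis c11 : c1 != 1.

Lemma ExC (k : R) {X} : P.-integrable setT (EFin \o X) ->
  Ex P (fun w => k + X w) = k + Ex P X.
Proof. by move=> iX; rewrite ExD ?Ex_cst //; exact: int_cst. Qed.

Lemma intC (k : R) {X} : P.-integrable setT (EFin \o X) ->
  P.-integrable setT (EFin \o (fun w => k + X w)).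
Proof. by move=> iX; apply: intD => //; exact: int_cst. Qed.

Lemma partii (xi eta : Om -> R) : L2 P xi -> L2 P eta ->
       (exists nu : probability (R * R)%type R,
          P2 nu /\ is_law P xi (fun w => hc1 c1 * Ex P eta + eta w) nu) /\
       (forall nu : probability (R * R)%type R, P2 nu ->
        forall alpha : Om -> R,
          (forall w, is_minimizer (hobj c1 c2 c3 b1 b2 f1 (xi w) (eta w) nu) (alpha w)) ->
          (is_law P xi alpha nu <->
           is_law P xi (fun w => hc1 c1 * Ex P eta + eta w) nu)).
Proof.
move=> hxi heta; have hY := @L2_affine _ _ _ P (hc1 c1 * Ex P eta) eta heta.
have [mxi _] := hxi; have [mY _] := hY.
split.
  exists (distribution P (mkmf (mpair _ _ mxi mY))); split.
  - exact: (@P2_law _ _ _ P _ _ _ hxi hY (law_dist P _ _ mxi mY)).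
  - exact: (law_dist P _ _ mxi mY).
move=> nu _ alpha halpha.
have ea : alpha = fun w => c1 * mean2 nu + eta w.
  apply/funext => w; rewrite (proj1 (minimizer_iff _ _ _ _ _ _ _ _ _ _) (halpha w)).
  by rewrite /a0 addrC.
have ixi := L2_int _ hxi; have ieta := L2_int _ heta.
have hh : 1 - c1 != 0 by rewrite subr_eq0 eq_sym.
split => hl.
- have hm : mean2 nu = c1 * mean2 nu + Ex P eta.
    rewrite ea in hl.
    by rewrite {1}(mean2_law P ixi (intC _ ieta) hl) (ExC _ ieta).
  have key : c1 * mean2 nu = hc1 c1 * Ex P eta.
    rewrite (_ : Ex P eta = mean2 nu - c1 * mean2 nu); last lra.
    rewrite /hc1; field => //.
  by rewrite ea key in hl.
- have hm : mean2 nu = hc1 c1 * Ex P eta + Ex P eta.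
    by rewrite (mean2_law P ixi (intC _ ieta) hl) (ExC _ ieta).
  have key : c1 * mean2 nu = hc1 c1 * Ex P eta.
    rewrite hm /hc1; field => //.
  by rewrite ea key.
Qed.

Lemma partiii (xi eta : Om -> R) (rho nu : probability (R * R)%type R) :
       L2 P xi -> L2 P eta ->
       is_law P xi eta rho ->
       is_law P xi (fun w => hc1 c1 * Ex P eta + eta w) nu ->
       forall x p : R, Hinf c1 c2 c3 b1 b2 f1 x p nu = Hhat c1 c2 c3 b1 b2 f1 x p rho.
Proof.
move=> hxi heta hr hn x p.
have ixi := L2_int _ hxi; have ieta := L2_int _ heta.
rewrite Hinf_val (@hobj_Hhat _ c1 c2 c3 b1 b2 f1 x p nu rho) //.
- by rewrite (mean1_law P ixi (intC _ ieta) hn) (mean1_law P ixi ieta hr).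
- rewrite (mean2_law P ixi (intC _ ieta) hn) (mean2_law P ixi ieta hr).
  by rewrite (ExC _ ieta) hc1_bc1.
Qed.
End Parts.
Section Calc.
Context {R : realType}.

Lemma is_derive_derive1 (f : R -> R) x df : is_derive x (1:R) f df -> derive1 f x = df.
Proof. by move=> h; rewrite derive1E; exact: derive_val. Qed.

Lemma mvt1 (g : R -> R) : (forall x, derivable g x 1) ->
  forall a h : R, exists2 c : R, `|c - a| <= `|h| & g (a + h) - g a = derive1 g c * h.
Proof.
move=> dg a h.
have dd : forall x : R, is_derive x (1:R) g (derive1 g x).
  by move=> x; rewrite derive1E; apply: derivableP.
have cg : forall (lo hi : R), {within `[lo, hi], continuous g}.
  by move=> lo hi; apply: derivable_within_continuous => x _; exact: dg.
have [h0|h0] := leP 0 h.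
- have [c cin e] := MVT_segment (f := g) (df := derive1 g) (a := a) (b := a + h)
    (ltac:(lra)) (fun x _ => dd x) (cg _ _).
  exists c; last by rewrite e; congr (_ * _); ring.
  move: cin; rewrite in_itv /= => /andP [l1 l2].
  rewrite ger0_norm ?(ger0_norm h0) //; lra.
- have [c cin e] := MVT_segment (f := g) (df := derive1 g) (a := a + h) (b := a)
    (ltac:(lra)) (fun x _ => dd x) (cg _ _).
  exists c.
    move: cin; rewrite in_itv /= => /andP [l1 l2].
    rewrite ler0_norm ?(ltr0_norm h0); lra.
  have : g (a + h) - g a = - (g a - g (a + h)) by ring.
  by move=> ->; rewrite e; ring.
Qed.
End Calc.
Section B1.
Context {R : realType}.
Lemma cont2 (f : (R * R)%type -> R) (z : R * R) : continuous f ->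
  forall eps : R, 0 < eps -> exists2 del : R, 0 < del &
   forall u v : R, `|u - z.1| < del -> `|v - z.2| < del -> `|f (u, v) - f z| < eps.
Proof.
move=> cf eps e0.
have := cf z; move/cvgrPdist_lt => /(_ eps e0).
move/nbhs_ballP => [del d0 hb]; exists del => // u v hu hv.
rewrite distrC; apply: (hb (u, v)).
by split; rewrite /ball /= distrC.
Qed.

Lemma b1_diff (b1 : R -> R -> R) : C1_2 b1 -> forall m y eps : R, 0 < eps ->
  exists2 del : R, 0 < del & forall d1 e : R, `|d1| < del -> `|e| < del ->
  `|b1 (m + d1) (y + e) - b1 m y - pd1 b1 m y * d1 - pd2 b1 m y * e|
    <= eps * (`|d1| + `|e|).
Proof.
move=> [db [cp1 cp2]] m y eps e0.
have [del1 d10 h1] := cont2 _ (m, y) cp1 _ e0.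
have [del2 d20 h2] := cont2 _ (m, y) cp2 _ e0.
exists (Num.min del1 del2); first by rewrite lt_min d10 d20.
move=> d1 e; rewrite !lt_min => /andP [hd1 hd2] /andP [he1 he2].
have [c hc eq1] := @mvt1 _ (fun t => b1 t (y + e)) (fun t => (db t (y + e)).1) m d1.
have [c' hc' eq2] := @mvt1 _ (fun t => b1 m t) (fun t => (db m t).2) y e.
have k1 : `|pd1 b1 c (y + e) - pd1 b1 m y| < eps.
  apply: (h1 c (y + e)) => /=; first by apply: le_lt_trans hc hd1.
  by rewrite addrC addKr.
have k2 : `|pd2 b1 m c' - pd2 b1 m y| < eps.
  apply: (h2 m c') => /=; first by rewrite subrr normr0.
  by apply: le_lt_trans hc' he2.
have -> : b1 (m + d1) (y + e) - b1 m y - pd1 b1 m y * d1 - pd2 b1 m y * e =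
   (pd1 b1 c (y + e) - pd1 b1 m y) * d1 + (pd2 b1 m c' - pd2 b1 m y) * e.
  have E1 : b1 (m + d1) (y + e) = b1 m (y + e) + pd1 b1 c (y + e) * d1.
    rewrite -eq1 /pd1; ring.
  have E2 : b1 m (y + e) = b1 m y + pd2 b1 m c' * e.
    rewrite -eq2 /pd2; ring.
  rewrite E1 E2; ring.
apply: (le_trans (ler_normD _ _)); rewrite !normrM mulrDr.
apply: lerD; apply: ler_wpM2r => //; exact: ltW.
Qed.
End B1.
Section HF.
Context {R : realType}.
Variables (c1 c2 c3 : R) (b1 : R -> R -> R) (b2 f1 : R -> R) (x p : R).

Definition HF (m1 m2 : R) : R :=
  - (hc1 c1 * m2 + p) ^+ 2 / 2
  + p * (b1 m1 (bc1 c1 * m2) + b2 x)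
  + c2 * x * m1 + hc3 c1 c3 * x * m2 + f1 x.

Definition G1 (m1 m2 : R) := p * pd1 b1 m1 (bc1 c1 * m2) + c2 * x.
Definition G2 (m1 m2 : R) := - hc1 c1 * (hc1 c1 * m2 + p)
   + p * (bc1 c1 * pd2 b1 m1 (bc1 c1 * m2)) + hc3 c1 c3 * x.

Lemma Hhat_HF rho : Hhat c1 c2 c3 b1 b2 f1 x p rho = HF (mean1 rho) (mean2 rho).
Proof. by []. Qed.

Lemma HF_diff : C1_2 b1 -> forall m1 m2 eps : R, 0 < eps ->
  exists2 delta : R, 0 < delta & forall d1 d2 N : R,
   `|d1| <= N -> `|d2| <= N -> N < delta ->
   `|HF (m1 + d1) (m2 + d2) - HF m1 m2 - (G1 m1 m2 * d1 + G2 m1 m2 * d2)| <= eps * N.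
Proof.
move=> hb m1 m2 eps e0.
set B := `|bc1 c1|; set h := hc1 c1.
have B0 : 0 <= B by apply: normr_ge0.
set K := `|p| * (1 + B) + 1.
have K0 : 0 < K by rewrite /K; have := normr_ge0 p; nra.
have e'0 : 0 < eps / (2 * K) by apply: divr_gt0 => //; nra.
have [del0 d00 hd] := b1_diff _ hb m1 (bc1 c1 * m2) _ e'0.
have h2 : 0 < 2 * (h ^+ 2 + 1) by have := sqr_ge0 h; nra.
exists (Num.min (del0 / (1 + B)) (eps / (2 * (h ^+ 2 + 1)))).
  by rewrite lt_min; apply/andP; split; apply: divr_gt0 => //; nra.
move=> d1 d2 N hd1 hd2; rewrite lt_min => /andP [hN1 hN2].
have N0 : 0 <= N by apply: le_trans hd1.
have y0 : `|d1| < del0.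
  apply: (le_lt_trans hd1); apply: (lt_le_trans hN1).
  rewrite ler_pdivrMr; last nra.
  have := ltW d00; nra.
have y1 : `|bc1 c1 * d2| < del0.
  rewrite normrM -/B.
  have : N * (1 + B) < del0 by rewrite -ltr_pdivlMr //; nra.
  have := normr_ge0 d2; nra.
have := hd d1 (bc1 c1 * d2) y0 y1.
set rem := `|_ - _ - _ - _| => hrem.
have -> : HF (m1 + d1) (m2 + d2) - HF m1 m2 - (G1 m1 m2 * d1 + G2 m1 m2 * d2)
   = - (h ^+ 2 * d2 ^+ 2) / 2 + p * (b1 (m1 + d1) (bc1 c1 * m2 + bc1 c1 * d2)
      - b1 m1 (bc1 c1 * m2) - pd1 b1 m1 (bc1 c1 * m2) * d1
      - pd2 b1 m1 (bc1 c1 * m2) * (bc1 c1 * d2)).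
  rewrite /HF /G1 /G2 -/h.
  have -> : bc1 c1 * (m2 + d2) = bc1 c1 * m2 + bc1 c1 * d2 by ring.
  by field.
have eK : eps / (2 * K) * (2 * K) = eps by rewrite mulfVK //; nra.
set e' := eps / (2 * K) in e'0 hrem eK.
rewrite normrM -/B in hrem.
apply: (le_trans (ler_normD _ _)).
have t1 : `|- (h ^+ 2 * d2 ^+ 2) / 2| <= eps / 2 * N.
  have hh := sqr_ge0 h; have dd := sqr_ge0 d2.
  rewrite ler0_norm; last by nra.
  have hN : N * (2 * (h ^+ 2 + 1)) < eps.
    by move: hN2; rewrite ltr_pdivlMr.
  have := sqr_ge0 h; have := sqr_ge0 d2.
  have : d2 ^+ 2 <= N ^+ 2.
    rewrite -real_normK ?num_real // ; apply: lerXn2r => //; rewrite ?nnegrE //.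
  nra.
have t2 : `|p * (b1 (m1 + d1) (bc1 c1 * m2 + bc1 c1 * d2) - b1 m1 (bc1 c1 * m2) - pd1 b1 m1 (bc1 c1 * m2) * d1 - pd2 b1 m1 (bc1 c1 * m2) * (bc1 c1 * d2))| <= eps / 2 * N.
  rewrite normrM -/rem.
  have := normr_ge0 p; have := normr_ge0 d1; have := normr_ge0 d2.
  have : `|p| * (1 + B) <= K by rewrite /K; lra.
  move=> hK hd2' hd1' hp.
  have s0 : `|d1| + B * `|d2| <= (1 + B) * N by nra.
  have s1 := le_trans hrem (ler_wpM2l (ltW e'0) s0).
  have s2 := ler_wpM2l hp s1.
  apply: (le_trans s2).
  have en : 0 <= e' * N by nra.
  have : `|p| * (e' * ((1 + B) * N)) = (e' * N) * (`|p| * (1 + B)) by ring.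
  move=> ->.
  have : eps / 2 * N = (e' * N) * K by rewrite -eK; field.
  move=> ->; exact: ler_wpM2l.
lra.
Qed.
End HF.
Section Lions.
Context {R : realType} {d : measure_display} {Om : measurableType d}.
Variable P : probability Om R.
Variables (c1 c2 c3 : R) (b1 : R -> R -> R) (b2 f1 : R -> R).

Lemma int_sq_cst (rho : probability (R * R)%type R) (k : R) :
  (\int[rho]_z ((k) ^+ 2)%:E < +oo)%E.
Proof.
rewrite integral_cst //.
have e : rho [set: (R * R)%type] = 1%E := probability_setT rho.
by move: e => /= ->; rewrite mule1 ltry.
Qed.

Lemma lions x p rho : C1_2 b1 ->
  LionsDer P (fun r => Hhat c1 c2 c3 b1 b2 f1 x p r) rho
    (fun z => G1 c1 c2 b1 x p (mean1 rho) (mean2 rho))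
    (fun z => G2 c1 c3 b1 x p (mean1 rho) (mean2 rho)).
Proof.
move=> hb; split.
- exact: measurable_cst.
- exact: measurable_cst.
- exact: int_sq_cst.
- exact: int_sq_cst.
move=> X Y hX hY hl eps e0.
have [delta d0 hd] := HF_diff c1 c2 c3 b1 b2 f1 x p hb (mean1 rho) (mean2 rho) _ e0.
exists delta => // H1 H2 h1 h2 hN rho' hl'.
have iX := L2_int _ hX; have iY := L2_int _ hY.
have i1 := L2_int _ h1; have i2 := L2_int _ h2.
rewrite !Hhat_HF.
have m1' : mean1 rho' = mean1 rho + Ex P H1.
  rewrite (mean1_law P (intD P _ _ iX i1) (intD P _ _ iY i2) hl') (mean1_law P iX iY hl).
  by rewrite ExD.
have m2' : mean2 rho' = mean2 rho + Ex P H2.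
  rewrite (mean2_law P (intD P _ _ iX i1) (intD P _ _ iY i2) hl') (mean2_law P iX iY hl).
  by rewrite ExD.
rewrite m1' m2' ExD; last 2 first.
- exact: intZ.
- exact: intZ.
rewrite !ExZ //.
apply: hd => //.
- exact: absEx_le_normL2.
- exact: absEx_le_normL2'.
Qed.
End Lions.
Section Mat.
Context {R : realType}.
Lemma condmat_form (c1 c2 c3 : R) b1 m1 m2 (z g e : R) :
  let k := bc1 c1 * pd2 b1 m1 m2 - hc1 c1 in
  let u1 := pd1 b1 m1 m2 in
  let v : 'cV[R]_3 := \col_(i < 3) nth 0 [:: z; g; e] i in
  (v^T *m condmat c1 c2 c3 b1 m1 m2 *m v) 0 0 =
  (1 - k) * z ^+ 2 + k * g ^+ 2 + c2 * e ^+ 2 + (hc3 c1 c3 + u1) * e * g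
   + (hc3 c1 c3 - u1) * e * z.
Proof.
move=> k u1 v.
rewrite !mxE !big_ord_recr big_ord0 /= !mxE !big_ord_recr !big_ord0 /= !mxE /=.
rewrite /k /u1; by field.
Qed.
End Mat.
Section Calc2.
Context {R : realType}.
Lemma quad (f : R -> R) a b c : (forall y, f y = a * y ^+ 2 + b * y + c) ->
  forall x : R, is_derive x (1:R) f (2 * a * x + b).
Proof.
move=> hf x; have -> : f = (fun y => a * y ^+ 2 + b * y + c) by apply/funext.
apply: is_derive_eq.
rewrite addr0; change (a * (x * 1 + x * 1) + b * 1 = 2 * a * x + b); ring.
Qed.

Lemma quad_der (f : R -> R) a b c x : (forall y, f y = a * y ^+ 2 + b * y + c) ->
  derivable f x 1 /\ derive1 f x = 2 * a * x + b.
Proof.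
move=> hf; have h := @quad f a b c hf x; split; first by case: h.
exact: is_derive_derive1.
Qed.

Lemma aff_der (f : R -> R) a b x : (forall y, f y = a * y + b) ->
  derivable f x 1 /\ derive1 f x = a.
Proof.
move=> hf; have hf' : forall y, f y = 0 * y ^+ 2 + a * y + b by move=> y; rewrite hf; ring.
have [h1 h2] := @quad_der f 0 a b x hf'.
by split => //; rewrite h2; ring.
Qed.
End Calc2.
Section Final.
Context {R : realType} {d : measure_display} {Om : measurableType d}.
Variable P : probability Om R.
Notation Int X := (P.-integrable setT (EFin \o X)).

Lemma Ex_lin (a0 s a1 a2 a3 : R) (S X Y Z : Om -> R) :
  Int S -> Int X -> Int Y -> Int Z ->
  Ex P (fun w => a0 + s * S w + a1 * X w + a2 * Y w + a3 * Z w) =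
  a0 + s * Ex P S + a1 * Ex P X + a2 * Ex P Y + a3 * Ex P Z.
Proof.
move=> iS iX iY iZ.
have i0 : Int (fun w => a0 + s * S w) by apply: intD; [exact: int_cst| exact: intZ].
have i1 : Int (fun w => a0 + s * S w + a1 * X w) by apply: intD => //; exact: intZ.
have i2 : Int (fun w => a0 + s * S w + a1 * X w + a2 * Y w) by apply: intD => //; exact: intZ.
rewrite ExD //; last exact: intZ.
rewrite ExD //; last exact: intZ.
rewrite ExD //; last exact: intZ.
rewrite ExD //; [|exact: int_cst|exact: intZ].
by rewrite Ex_cst !ExZ.
Qed.

Lemma final_ineq (c2 h k u1 : R) (xi eta gam zet : Om -> R)
  (Hpp : R -> R) (Hxr1 Hxr2 Hpr1 Hpr2 : R -> R -> R) :
  L2 P eta -> L2 P gam -> L2 P zet ->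
  (forall z g e : R, 0 <= (1 - k) * z ^+ 2 + k * g ^+ 2 + c2 * e ^+ 2
       + (h + u1) * e * g + (h - u1) * e * z) ->
  (forall x, Hpp x = -1) -> (forall x y, Hxr1 x y = c2) -> (forall x y, Hxr2 x y = h) ->
  (forall x y, Hpr1 x y = u1) -> (forall x y, Hpr2 x y = k) ->
  Ex P (fun w => Ex P (fun w' =>
             zet w * Hpp (xi w) * zet w
           - eta w * (Hxr1 (xi w) (xi w') * eta w'
                      + Hxr2 (xi w) (xi w') * (gam w' + zet w'))
           - (gam w - zet w) * (Hpr1 (xi w) (xi w') * eta w'
                      + Hpr2 (xi w) (xi w') * (gam w' + zet w')))) <= 0.
Proof.
move=> heta hgam hzet psd e1 e2 e3 e4 e5.
have ie := L2_int _ heta; have ig := L2_int _ hgam; have iz := L2_int _ hzet.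
have iz2 := L2_int2 _ hzet.
set e := Ex P eta; set g := Ex P gam; set z := Ex P zet.
have -> : (fun w => Ex P (fun w' =>
             zet w * Hpp (xi w) * zet w
           - eta w * (Hxr1 (xi w) (xi w') * eta w'
                      + Hxr2 (xi w) (xi w') * (gam w' + zet w'))
           - (gam w - zet w) * (Hpr1 (xi w) (xi w') * eta w'
                      + Hpr2 (xi w) (xi w') * (gam w' + zet w')))) =
   (fun w => 0 + (-1) * (zet w ^+ 2) + (- (c2 * e + h * (g + z))) * eta w
       + (- (u1 * e + k * (g + z))) * gam w + (u1 * e + k * (g + z)) * zet w).
  apply/funext => w.
  have -> : (fun w' => zet w * Hpp (xi w) * zet w
           - eta w * (Hxr1 (xi w) (xi w') * eta w'
                      + Hxr2 (xi w) (xi w') * (gam w' + zet w'))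
           - (gam w - zet w) * (Hpr1 (xi w) (xi w') * eta w'
                      + Hpr2 (xi w) (xi w') * (gam w' + zet w'))) =
     (fun w' => (- zet w ^+ 2) + 0 * eta w' + (- (c2 * eta w + u1 * (gam w - zet w))) * eta w'
        + (- (h * eta w + k * (gam w - zet w))) * gam w'
        + (- (h * eta w + k * (gam w - zet w))) * zet w').
    by apply/funext => w'; rewrite e1 e2 e3 e4 e5; ring.
  rewrite Ex_lin // -/e -/g -/z; ring.
rewrite Ex_lin // -/e -/g -/z.
have hz := Ex_sq_le P zet hzet; rewrite -/z in hz.
have hQ := psd z g e.
set Ez2 := Ex P (fun w => zet w ^+ 2) in hz *.
have -> : 0 + -1 * Ez2 + - (c2 * e + h * (g + z)) * e +
  - (u1 * e + k * (g + z)) * g + (u1 * e + k * (g + z)) * z =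
  - (Ez2 - z ^+ 2) - ((1 - k) * z ^+ 2 + k * g ^+ 2 + c2 * e ^+ 2
       + (h + u1) * e * g + (h - u1) * e * z) by ring.
lra.
Qed.
End Final.
Section HhatD.
Context {R : realType}.
Variables (c1 c2 c3 : R) (b1 : R -> R -> R) (b2 f1 : R -> R).

Lemma Hhat_quad x rho : exists b c : R, forall q,
  Hhat c1 c2 c3 b1 b2 f1 x q rho = (-1/2) * q ^+ 2 + b * q + c.
Proof.
exists (b1 (mean1 rho) (bc1 c1 * mean2 rho) + b2 x - hc1 c1 * mean2 rho).
exists (- (hc1 c1 * mean2 rho) ^+ 2 / 2 + c2 * x * mean1 rho + hc3 c1 c3 * x * mean2 rho + f1 x).
by move=> q; rewrite /Hhat; field.
Qed.

Lemma Hhat_derivs x rho :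
  (forall p, derivable (fun q => Hhat c1 c2 c3 b1 b2 f1 x q rho) p 1) /\
  (forall p, derivable (fun q => derive1 (fun q' => Hhat c1 c2 c3 b1 b2 f1 x q' rho) q) p 1) /\
  (forall p, derive1 (fun q => derive1 (fun q' => Hhat c1 c2 c3 b1 b2 f1 x q' rho) q) p = -1).
Proof.
have [b [c hq]] := Hhat_quad x rho.
have d1 : forall q, derive1 (fun q' => Hhat c1 c2 c3 b1 b2 f1 x q' rho) q = -1 * q + b.
  by move=> q; rewrite (proj2 (@quad_der _ _ _ _ _ q hq)); field.
split; first by move=> p; exact: (proj1 (@quad_der _ _ _ _ _ p hq)).
split=> p; by have [? ?] := @aff_der _ _ (-1) b p d1.
Qed.
End HhatD.
Theorem mainTheorem4 (R : realType) (d : measure_display) (Om : measurableType d)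
  (P : probability Om R) (c1 c2 c3 : R) (b1 : R -> R -> R) (b2 f1 : R -> R) :
  atomless P ->
  0 < c1 -> c1 < 1 -> 0 < c2 -> 0 < c3 ->
  C1_2 b1 -> C1 b2 -> C1 f1 ->
  (forall m1 m2 : R, psd3 (condmat c1 c2 c3 b1 m1 m2)) ->
  [/\
  (* Assumption (F)(i): unique minimizer *)
    (forall (x p : R) (nu : probability (R * R)%type R), P2 nu ->
       exists! a : R, is_minimizer (hobj c1 c2 c3 b1 b2 f1 x p nu) a),
  (* Assumption (F)(ii) with Phi(L_{(xi,eta)}) = L_{(xi, hc1 E[eta] + eta)} *)
    (forall xi eta : Om -> R, L2 P xi -> L2 P eta -> sigma_meas xi eta ->
       (exists nu : probability (R * R)%type R,
          P2 nu /\ is_law P xi (fun w => hc1 c1 * Ex P eta + eta w) nu) /\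
       (forall nu : probability (R * R)%type R, P2 nu ->
        forall alpha : Om -> R,
          (forall w, is_minimizer (hobj c1 c2 c3 b1 b2 f1 (xi w) (eta w) nu) (alpha w)) ->
          (is_law P xi alpha nu <->
           is_law P xi (fun w => hc1 c1 * Ex P eta + eta w) nu))),
  (* \widehat H(x,p,rho) = H(x,p,Phi(rho)) is given by the explicit formula *)
    (forall (xi eta : Om -> R) (rho nu : probability (R * R)%type R),
       L2 P xi -> L2 P eta -> sigma_meas xi eta ->
       is_law P xi eta rho ->
       is_law P xi (fun w => hc1 c1 * Ex P eta + eta w) nu ->
       forall x p : R, Hinf c1 c2 c3 b1 b2 f1 x p nu = Hhat c1 c2 c3 b1 b2 f1 x p rho) &
  (* condition (LL-H) for \widehat H *)
    exists D1 D2 : R -> R -> probability (R * R)%type R -> R -> R -> R,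
    [/\ (forall (x p : R) (rho : probability (R * R)%type R), P2 rho ->
           LionsDer P (fun r => Hhat c1 c2 c3 b1 b2 f1 x p r) rho
             (fun z => D1 x p rho z.1 z.2) (fun z => D2 x p rho z.1 z.2)),
        (forall (x p : R) (rho : probability (R * R)%type R) (xt pt : R), P2 rho ->
           [/\ derivable (fun y => D1 y p rho xt pt) x 1,
               derivable (fun q => D1 x q rho xt pt) p 1,
               derivable (fun y => D2 y p rho xt pt) x 1 &
               derivable (fun q => D2 x q rho xt pt) p 1]),
        (forall (x p : R) (rho : probability (R * R)%type R), P2 rho ->
           derivable (fun q => Hhat c1 c2 c3 b1 b2 f1 x q rho) p 1 /\
           derivable (fun q => derive1 (fun q' => Hhat c1 c2 c3 b1 b2 f1 x q' rho) q) p 1) &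
        (forall phi : R -> R, Lipschitz phi ->
         forall xi eta gam zet : Om -> R,
           L2 P xi -> L2 P eta -> L2 P gam -> L2 P zet ->
         forall rho : probability (R * R)%type R,
           is_law P xi (fun w => phi (xi w)) rho ->
         let Hpp := fun x : R =>
           derive1 (fun q => derive1 (fun q' => Hhat c1 c2 c3 b1 b2 f1 x q' rho) q) (phi x) in
         let Hxr1 := fun x xt : R => derive1 (fun y => D1 y (phi x) rho xt (phi xt)) x in
         let Hxr2 := fun x xt : R => derive1 (fun y => D2 y (phi x) rho xt (phi xt)) x in
         let Hpr1 := fun x xt : R => derive1 (fun q => D1 x q rho xt (phi xt)) (phi x) in
         let Hpr2 := fun x xt : R => derive1 (fun q => D2 x q rho xt (phi xt)) (phi x) in
         Ex P (fun w => Ex P (fun w' =>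
             zet w * Hpp (xi w) * zet w
           - eta w * (Hxr1 (xi w) (xi w') * eta w'
                      + Hxr2 (xi w) (xi w') * (gam w' + zet w'))
           - (gam w - zet w) * (Hpr1 (xi w) (xi w') * eta w'
                      + Hpr2 (xi w) (xi w') * (gam w' + zet w')))) <= 0)]].
Proof.
move=> atl c10 c1l c20 c30 hb hb2 hf1 hpsd.
have c11 : c1 != 1 by rewrite lt_eqF.
split.
- move=> x p nu _; exists (a0 c1 p nu); split.
    exact/(minimizer_iff c1 c2 c3 b1 b2 f1 x p nu).
  by move=> a /(minimizer_iff c1 c2 c3 b1 b2 f1 x p nu) ->.
- move=> xi eta hxi heta _.
  exact: (partii P c1 c2 c3 b1 b2 f1 c11 _ _ hxi heta).
- move=> xi eta rho nu hxi heta _ hr hn x p.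
  exact: (partiii P c1 c2 c3 b1 b2 f1 c11 _ _ _ _ hxi heta hr hn).
exists (fun x p rho (_ _ : R) => G1 c1 c2 b1 x p (mean1 rho) (mean2 rho)).
exists (fun x p rho (_ _ : R) => G2 c1 c3 b1 x p (mean1 rho) (mean2 rho)).
split.
- move=> x p rho _; exact: (lions P c1 c2 c3 b1 b2 f1 x p rho hb).
- move=> x p rho xt pt _; split.
  + have [h _] := @aff_der _ (fun y => G1 c1 c2 b1 y p (mean1 rho) (mean2 rho)) c2
      (p * pd1 b1 (mean1 rho) (bc1 c1 * mean2 rho)) x (fun y => ltac:(rewrite /G1; ring)).
    exact: h.
  + have [h _] := @aff_der _ (fun q => G1 c1 c2 b1 x q (mean1 rho) (mean2 rho))
      (pd1 b1 (mean1 rho) (bc1 c1 * mean2 rho)) (c2 * x) p (fun y => ltac:(rewrite /G1; ring)).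
    exact: h.
  + have [h _] := @aff_der _ (fun y => G2 c1 c3 b1 y p (mean1 rho) (mean2 rho)) (hc3 c1 c3)
      (- hc1 c1 * (hc1 c1 * mean2 rho + p) + p * (bc1 c1 * pd2 b1 (mean1 rho) (bc1 c1 * mean2 rho)))
      x (fun y => ltac:(rewrite /G2; ring)).
    exact: h.
  + have [h _] := @aff_der _ (fun q => G2 c1 c3 b1 x q (mean1 rho) (mean2 rho))
      (- hc1 c1 + bc1 c1 * pd2 b1 (mean1 rho) (bc1 c1 * mean2 rho))
      (- hc1 c1 * (hc1 c1 * mean2 rho) + hc3 c1 c3 * x)
      p (fun y => ltac:(rewrite /G2; ring)).
    exact: h.
- move=> x p rho _; have [h1 [h2 _]] := Hhat_derivs c1 c2 c3 b1 b2 f1 x rho.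
  by split; [exact: h1 | exact: h2].
move=> phi _ xi eta gam zet _ heta hgam hzet rho _.

cbv zeta.
set m1 := mean1 rho; set m2 := mean2 rho.
set k := bc1 c1 * pd2 b1 m1 (bc1 c1 * m2) - hc1 c1.
set u1 := pd1 b1 m1 (bc1 c1 * m2).
apply: (final_ineq P c2 (hc3 c1 c3) k u1 xi eta gam zet _ _ _ _ _ heta hgam hzet).
- move=> z g e.
  have := hpsd m1 (bc1 c1 * m2) (\col_(i < 3) nth 0 [:: z; g; e] i).
  by rewrite condmat_form.
- move=> y; have [_ [_ h]] := Hhat_derivs c1 c2 c3 b1 b2 f1 y rho; exact: h.
- move=> y yt.
  exact: (proj2 (@aff_der _ (fun y0 => G1 c1 c2 b1 y0 (phi y) m1 m2) c2
      (phi y * u1) y (fun y0 => ltac:(rewrite /G1 /u1 /k; ring)))).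
- move=> y yt.
  exact: (proj2 (@aff_der _ (fun y0 => G2 c1 c3 b1 y0 (phi y) m1 m2) (hc3 c1 c3)
      (- hc1 c1 * (hc1 c1 * m2 + phi y) + phi y * (bc1 c1 * pd2 b1 m1 (bc1 c1 * m2)))
      y (fun y0 => ltac:(rewrite /G2 /u1 /k; ring)))).
- move=> y yt.
  exact: (proj2 (@aff_der _ (fun q => G1 c1 c2 b1 y q m1 m2) u1 (c2 * y) (phi y)
      (fun y0 => ltac:(rewrite /G1 /u1 /k; ring)))).
- move=> y yt.
  exact: (proj2 (@aff_der _ (fun q => G2 c1 c3 b1 y q m1 m2) k
      (- hc1 c1 * (hc1 c1 * m2) + hc3 c1 c3 * y) (phi y)
      (fun y0 => ltac:(rewrite /G2 /k; ring)))).
Qed.
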